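(* Let $G$ be a finite group with irreducible complex characters $\varphi_1,\dots,\varphi_t$, and let $Q$ be a quasigroup of order $|G|$. Then $Q$ is a balanced cover of the weighted character quasigroup of $G$ if and only if there exist pairwise disjoint subsets $S_1,\dots,S_t\subseteq Q$ with $|S_i|=\varphi_i(1)^2$ for each $i$ and $$S_i\cdot S_j=\sum_{k=1}^t\frac{\varphi_i(1)\varphi_j(1)\langle\varphi_i\cdot\varphi_j\mid\varphi_k\rangle}{\varphi_k(1)}\,S_k\qquad\text{for all }1\le i,j\le t.$$
   Context: The scalar product is $\langle\theta\mid\varphi\rangle=\frac{1}{|G|}\sum_{g\in G}\theta(g)\overline{\varphi(g)}$. The weighted character quasigroup of $G$ consists of the set $\{\varphi_1,\dots,\varphi_t\}$ with weights $w(\varphi_i)=\varphi_i(1)^2$ and multiplication function $\alpha(\varphi_i,\varphi_j,\varphi_k)=\varphi_i(1)\varphi_j(1)\varphi_k(1)\langle\varphi_i\varphi_j\mid\varphi_k\rangle$. A quasigroup $Q$ of order $|G|$ covers it if there is a surjection $f:Q\to\{\varphi_1,\dots,\varphi_t\}$ with $|f^{-1}\{\varphi_i\}|=\varphi_i(1)^2$ and $|\{(a,b)\in f^{-1}\{\varphi_i\}\times f^{-1}\{\varphi_j\} : f(ab)=\varphi_k\}|=\alpha(\varphi_i,\varphi_j,\varphi_k)$ for all $i,j,k$. The cover is balanced if, for all $i,j$ and all $q\in Q$, the number $m_q$ of pairs $(a,b)\in f^{-1}\{\varphi_i\}\times f^{-1}\{\varphi_j\}$ with $ab=q$ depends only on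 $f(q)$. For subsets (or multisubsets) $A,B$ of $Q$, $A\cdot B$ denotes the formal sum $\sum_{a\in A,b\in B}ab$ in the free $\mathbb{N}$-semimodule $\mathbb{N}Q$ on $Q$ (so it records multiplicities), and a subset $S$ is identified with $\sum_{q\in S}q$. *)

(* Defs.v *)
From HB Require Import structures.
From mathcomp Require Import all_boot all_order all_algebra all_fingroup all_solvable all_field all_character.
Set Implicit Arguments. Unset Strict Implicit. Unset Printing Implicit Defensive.
Import Order.TTheory GRing.Theory Num.Theory.
Local Open Scope ring_scope.

Definition quasigroup (Q : finType) (mul : Q -> Q -> Q) : Prop :=
  (forall a, bijective (mul a)) /\ (forall b, bijective (fun x => mul x b)).

Definition char_alpha (gT : finGroupType) (G : {group gT}) (i j k : Iirr G) : algC :=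
  'chi_i 1%g * 'chi_j 1%g * 'chi_k 1%g * '['chi_i * 'chi_j, 'chi_k].

(* number of pairs (a,b) in A x B with a b = q : the multiplicity of q in the
   formal sum A . B in N Q *)
Definition prod_mult (Q : finType) (mul : Q -> Q -> Q) (A B : {set Q}) (q : Q) : nat :=
  #|[set p : Q * Q | (p.1 \in A) && (p.2 \in B) && (mul p.1 p.2 == q)]|.

Definition is_cover (gT : finGroupType) (G : {group gT}) (Q : finType)
    (mul : Q -> Q -> Q) (f : Q -> Iirr G) : Prop :=
  [/\ #|Q| = #|G|,
      (forall i : Iirr G, exists q, f q = i),
      (forall i : Iirr G, (#|f @^-1: [set i]|)%:R = 'chi_i 1%g ^+ 2) &
      (forall i j k : Iirr G,
         (#|[set p : Q * Q | (f p.1 == i) && (f p.2 == j) && (f (mul p.1 p.2) == k)]|)%:R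
           = char_alpha i j k)].

Definition is_balanced_cover (gT : finGroupType) (G : {group gT}) (Q : finType)
    (mul : Q -> Q -> Q) (f : Q -> Iirr G) : Prop :=
  is_cover mul f /\
  (forall (i j : Iirr G) (q q' : Q), f q = f q' ->
     prod_mult mul (f @^-1: [set i]) (f @^-1: [set j]) q
     = prod_mult mul (f @^-1: [set i]) (f @^-1: [set j]) q').

Definition char_coef (gT : finGroupType) (G : {group gT}) (i j k : Iirr G) : algC :=
  'chi_i 1%g * 'chi_j 1%g * '['chi_i * 'chi_j, 'chi_k] / 'chi_k 1%g.

(* Main.v *)
Require Import Defs.
From HB Require Import structures.
From mathcomp Require Import all_boot all_order all_algebra all_fingroup all_solvable all_field all_character.
From mathcomp Require Import ring.
Import Order.TTheory GRing.Theory Num.Theory.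
Local Open Scope ring_scope.

Lemma count_split (Q : finType) (mul : Q -> Q -> Q) (A B C : {set Q}) :
  #|[set p : Q * Q | (p.1 \in A) && (p.2 \in B) && (mul p.1 p.2 \in C)]|
  = (\sum_(q in C) prod_mult mul A B q)%N.
Proof.
rewrite -sum1_card (partition_big (fun p : Q * Q => mul p.1 p.2) (mem C)).
  apply: eq_bigr => q qC; rewrite /prod_mult -sum1_card; apply: eq_bigl => p.
  have qC' : (q \in C) = true by exact: qC.
  rewrite !inE; case: eqP => [->|]; rewrite ?qC' ?andbT ?andbF //.
by move=> p; rewrite inE => /andP[].
Qed.

Lemma sum_indic (gT : finGroupType) (G : {group gT}) (c : Iirr G -> algC)
   (P : Iirr G -> bool) (i : Iirr G) :
  (forall k, P k = (k == i)) -> \sum_k c k * (P k)%:R = c i.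
Proof.
move=> HP; rewrite (bigD1 i) //= HP eqxx mulr1 big1 ?addr0 // => k /negbTE nki.
by rewrite HP nki mulr0.
Qed.

Theorem mainTheorem3 (gT : finGroupType) (G : {group gT}) (Q : finType)
    (mul : Q -> Q -> Q) (hQ : quasigroup mul) (hord : #|Q| = #|G|) :
  (exists f : Q -> Iirr G, is_balanced_cover mul f) <->
  (exists S : Iirr G -> {set Q},
     [/\ (forall i j : Iirr G, i != j -> [disjoint S i & S j]),
         (forall i : Iirr G, (#|S i|)%:R = 'chi_i 1%g ^+ 2) &
         (forall (i j : Iirr G) (q : Q),
            (prod_mult mul (S i) (S j) q)%:R
            = \sum_(k : Iirr G) char_coef i j k * (q \in S k)%:R)]).
Proof.
split.
  move=> [f [[_ _ hcard hcount] hbal]].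
  exists (fun i => f @^-1: [set i]); split => //.
    move=> i j nij; rewrite -setI_eq0; apply/eqP/setP => q.
    rewrite !inE; apply/negP => /andP[/eqP -> /eqP eji].
    by rewrite eji eqxx in nij.
  move=> i j q.
  rewrite (@sum_indic _ _ _ _ (f q)); last by move=> k; rewrite !inE eq_sym.
  set k := f q.
  have h := hcount i j k.
  have eset : [set p : Q * Q | (f p.1 == i) && (f p.2 == j) && (f (mul p.1 p.2) == k)]
     = [set p : Q * Q | (p.1 \in f @^-1: [set i]) && (p.2 \in f @^-1: [set j])
                    && (mul p.1 p.2 \in f @^-1: [set k])].
    by apply/setP => p; rewrite !inE.
  rewrite eset count_split in h.
  have e : (\sum_(q' in f @^-1: [set k]) prod_mult mul (f @^-1: [set i]) (f @^-1: [set j]) q'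
         = \sum_(q' in f @^-1: [set k]) prod_mult mul (f @^-1: [set i]) (f @^-1: [set j]) q)%N.
    apply: eq_bigr => q'; rewrite !inE => /eqP fq'; exact: hbal.
  rewrite e sum_nat_const natrM hcard in h.
  have nz : 'chi_k 1%g ^+ 2 != 0 by rewrite expf_neq0 // irr1_neq0.
  apply: (mulfI nz); rewrite h /char_alpha /char_coef.
  have nz1 := irr1_neq0 k.
  by field.
move=> [S [hdis hcard hprod]].
have cover : forall q, exists i, q \in S i.
  have hsum : (#|\bigcup_i S i| = \sum_i #|S i|)%N.
    rewrite -sum1_card (partition_disjoint_bigcup _ _ hdis).
    by apply: eq_bigr => i _; rewrite sum1_card.
  have hsum' : (\sum_i #|S i| = #|G|)%N.
    apply/eqP; rewrite -(eqr_nat algC) natr_sum -irr_sum_square.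
    by apply/eqP/eq_bigr => i _; rewrite hcard.
  have hT : \bigcup_i S i = setT.
    apply/eqP; rewrite eqEcard subsetT cardsT hsum hsum' hord /=.
    by [].
  move=> q; have : q \in \bigcup_i S i by rewrite hT inE.
  by case/bigcupP => i _ qi; exists i.
pose f q := odflt ord0 [pick i | q \in S i].
have fP : forall q i, (f q == i) = (q \in S i).
  move=> q i; rewrite /f; case: pickP => [j qj | none] /=.
    apply/eqP/idP => [<- //|qi]; apply/eqP; apply: contraTT qi => nji.
    by rewrite (disjointFr (hdis _ _ nji) qj).
  by have [j qj] := cover q; rewrite none in qj.
have fS : forall i, f @^-1: [set i] = S i.
  by move=> i; apply/setP => q; rewrite !inE fP.
exists f; split; last first.
  move=> i j q q' fqq'; apply/eqP; rewrite -(eqr_nat algC); apply/eqP.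
  rewrite !fS !hprod (@sum_indic _ _ _ _ (f q)); last by move=> k; rewrite -fP eq_sym.
  by rewrite (@sum_indic _ _ _ _ (f q')) ?fqq' // => k; rewrite -fP eq_sym.
split => //.
- move=> i; have /card_gt0P [q qi] : (0 < #|S i|)%N.
    rewrite lt0n; apply/negP => /eqP h0; move: (hcard i); rewrite h0 => /esym/eqP.
    by rewrite expf_eq0 /= (negbTE (irr1_neq0 i)).
  by exists q; apply/eqP; rewrite fP.
- by move=> i; rewrite fS.
- move=> i j k.
  have -> : [set p : Q * Q | (f p.1 == i) && (f p.2 == j) && (f (mul p.1 p.2) == k)]
     = [set p : Q * Q | (p.1 \in S i) && (p.2 \in S j) && (mul p.1 p.2 \in S k)].
    by apply/setP => p; rewrite !inE !fP.
  rewrite count_split natr_sum.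
  rewrite (eq_bigr (fun _ => char_coef i j k)); last first.
    move=> q qk; rewrite hprod (@sum_indic _ _ _ _ k) // => k'.
    by rewrite -fP; apply/eqP/eqP => [/eqP|->]; [move/eqP=> <-; apply/eqP; rewrite fP|apply/eqP; rewrite fP].
  rewrite sumr_const -mulr_natr hcard /char_alpha /char_coef.
  have nz1 := irr1_neq0 k.
  by field.
Qed.
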